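(* Consider a financial network with $n$ institutions and $m$ underlying assets with prices $\vec p=(p_1,\dots,p_m)\ge 0$, asset-holding matrix $D=(D_{ik})$ and cross-holding matrix $C=(C_{ij})$ as described in the context. If the cross-holding graph has no directed cycles, then for every institution $i$ the equity valuation satisfies $V_i\le \|\vec p\|_1$.
   Context: Model: there are $n$ financial institutions and $m$ underlying assets; asset $k$ has price $p_k\ge 0$. $D_{ik}\ge 0$ is the fraction of asset $k$ owned by institution $i$ (so $\sum_i D_{ik}\le 1$ for each $k$). $C=(C_{ij})$ is an $n\times n$ nonnegative matrix, $C_{ij}$ being the fraction of institution $j$ owned by institution $i$, with $C_{ii}=0$. The self-holding of institution $j$ is $\hat C_{jj}=1-\sum_i C_{ij}$, assumed to satisfy $\hat C_{jj}>0$; $\hat C$ is the diagonal matrix with these entries. The equity valuation is the vector $\vec V$ solving $\vec V=D\vec p+C\vec V$, i.e. $\vec V=(I-C)^{-1}D\vec p$, and the market valuation is $\vec v=\hat C\vec V=\hat C(I-C)^{-1}D\vec p$. The cross-holding graph is the directed graph on the institutions with an edge from $j$ to $i$ whenever $C_{ij}>0$. *)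

(* Defs.v *)
From HB Require Import structures.
From mathcomp Require Import all_boot all_order all_algebra.
Set Implicit Arguments. Unset Strict Implicit. Unset Printing Implicit Defensive.
Import Order.TTheory GRing.Theory Num.Theory.
Local Open Scope ring_scope.

Definition cross_edge (R : numDomainType) (n : nat) (C : 'M[R]_n) : rel 'I_n :=
  fun j i => 0 < C i j.

Definition acyclic_graph (n : nat) (e : rel 'I_n) : Prop :=
  forall s : seq 'I_n, s != [::] -> ~~ cycle e s.

Definition equity_valuation (R : realFieldType) (n m : nat)
  (C : 'M[R]_n) (D : 'M[R]_(n, m)) (p : 'cV[R]_m) : 'cV[R]_n :=
  invmx (1%:M - C) *m (D *m p).

Definition self_holding (R : numDomainType) (n : nat) (C : 'M[R]_n) (j : 'I_n) : R :=
  1 - \sum_(i < n) C i j.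

(* Main.v *)
Require Import Defs.
From HB Require Import structures.
From mathcomp Require Import all_boot all_order all_algebra.
Import Order.TTheory GRing.Theory Num.Theory.
Local Open Scope ring_scope.

Section Aux.
Variables (R : realFieldType) (n : nat) (C : 'M[R]_n).
Hypothesis hC : forall i j : 'I_n, 0 <= C i j.
Hypothesis hself : forall j : 'I_n, 0 < self_holding C j.

Lemma exmax (F : 'I_n -> R) (A : pred 'I_n) l : A l ->
  exists2 l0, A l0 & forall j, A j -> F j <= F l0.
Proof. by move=> Al; case: (arg_maxP F Al) => l0 Al0 H; exists l0. Qed.

Lemma maxarg (x : 'I_n -> R) (A : pred 'I_n) :
  (forall l, A l -> `|x l| <= \sum_(k | A k) `|x k| * C k l) ->
  forall l, A l -> x l = 0.
Proof.
move=> H l Al.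
have [l0 Al0 Hm] := exmax (fun j => `|x j|) A l Al.
have H0 := H l0 Al0.
have H1 : \sum_(k | A k) `|x k| * C k l0 <= `|x l0| * \sum_(k < n) C k l0.
  rewrite mulr_sumr; apply: le_trans (_ : \sum_(k | A k) `|x l0| * C k l0 <= _).
    by apply: ler_sum => k Ak; apply: ler_wpM2r => //; exact: Hm.
  rewrite [X in _ <= X](bigID A) /= lerDl; apply: sumr_ge0 => k _.
  by apply: mulr_ge0.
have := hself l0; rewrite /self_holding subr_gt0 => hs.
have H2 : `|x l0| * (1 - \sum_(k < n) C k l0) <= 0.
  by rewrite mulrBr mulr1 subr_le0 (le_trans H0 H1).
have H3 : `|x l0| <= 0.
  by rewrite -(pmulr_lle0 _ (_ : 0 < 1 - \sum_(k < n) C k l0)) // subr_gt0.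
apply/eqP; rewrite -normr_le0; exact: le_trans (Hm l Al) H3.
Qed.
End Aux.
Arguments exmax {R n} F {A l}.
Arguments maxarg {R n C} hC hself {x A}.

Theorem lemma1 (R : realFieldType) (n m : nat)
  (C : 'M[R]_n) (D : 'M[R]_(n, m)) (p : 'cV[R]_m)
  (hp : forall k : 'I_m, 0 <= p k 0)
  (hD : forall (i : 'I_n) (k : 'I_m), 0 <= D i k)
  (hDsum : forall k : 'I_m, \sum_(i < n) D i k <= 1)
  (hC : forall i j : 'I_n, 0 <= C i j)
  (hCdiag : forall i : 'I_n, C i i = 0)
  (hself : forall j : 'I_n, 0 < self_holding C j)
  (hacyc : acyclic_graph (cross_edge C)) :
  forall i : 'I_n, equity_valuation C D p i 0 <= \sum_(k < m) `|p k 0|.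
Proof.
move=> i.
set A := 1%:M - C.
have unitA : A \in unitmx.
  rewrite unitmxE unitfE; apply/negP => /det0P [v nv0 vA].
  have Hv : forall l, v 0 l = \sum_k v 0 k * C k l.
    move=> l; move/matrixP: vA => /(_ 0 l).
    rewrite /A mulmxBr mulmx1 !mxE => /eqP; rewrite subr_eq0 => /eqP ->.
    by [].
  have := maxarg hC hself (x := fun l => v 0 l) (A := predT).
  move=> H; apply/negP: nv0; rewrite negbK; apply/eqP/matrixP => a b.
  rewrite ord1 mxE; apply: H => // l _; rewrite Hv.
  apply: le_trans (ler_norm_sum _ _ _) _; apply: ler_sum => k _.
  by rewrite normrM (ger0_norm (hC k l)).
set N := invmx A.
have HN : forall l, N i l = (i == l)%:R + \sum_k N i k * C k l.
  move=> l; have := mulVmx unitA; move/matrixP => /(_ i l).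
  rewrite /A mulmxBr mulmx1 !mxE => <-.
  by rewrite subrK.
set e := cross_edge C.
set Rr := fun l => connect e l i.
have Hoff : forall l, ~~ Rr l -> N i l = 0.
  apply: (maxarg hC hself (x := fun l => N i l) (A := fun l => ~~ Rr l)).
  move=> l Rl.
  have li : (i == l) = false.
    by apply/eqP => il; move: Rl; rewrite /Rr -il connect0.
  rewrite HN li add0r (bigID Rr) /= big1 ?add0r; last first.
    move=> k Rk; case: (ltgtP (C k l) 0) => [|hk|->]; last by rewrite mulr0.
      by move=> /lt_geF; rewrite hC.
    exfalso; move/negP: Rl; apply; rewrite /Rr.
    by apply: connect_trans Rk; apply: connect1; rewrite /e /cross_edge.
  apply: le_trans (ler_norm_sum _ _ _) _; apply: ler_sum => k _.
  by rewrite normrM (ger0_norm (hC k l)).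
have Hi : N i i = 1.
  rewrite HN eqxx big1 ?addr0 // => k _.
  case: (boolP (Rr k)) => Rk; last by rewrite Hoff // mul0r.
  case: (ltgtP (C k i) 0) => [|hk|->]; last by rewrite mulr0.
    by move=> /lt_geF; rewrite hC.
  exfalso; move: Rk; rewrite /Rr => /connectP [q pq lq].
  have := hacyc (k :: q) isT; apply/negP; rewrite negbK /=.
  by rewrite rcons_path pq -lq /e /cross_edge.
have Hle1 : forall l, N i l <= 1.
  move=> l; have [l0 _ Hm] := exmax (fun j => N i j) (A := predT) (isT : predT l).
  apply: le_trans (Hm l isT) _ => /=.
  case: (eqVneq i l0) => [<-|nil0]; first by rewrite Hi.
  have := hself l0; rewrite /self_holding subr_gt0 => hs.
  have H1 : N i l0 <= N i l0 * \sum_(k < n) C k l0.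
    rewrite {1}HN (negbTE nil0) add0r mulr_sumr; apply: ler_sum => k _.
    by apply: ler_wpM2r => //; exact: Hm.
  have H2 : N i l0 * (1 - \sum_(k < n) C k l0) <= 0.
    by rewrite mulrBr mulr1 subr_le0.
  have : N i l0 <= 0.
    by rewrite -(pmulr_lle0 _ (_ : 0 < 1 - \sum_(k < n) C k l0)) // subr_gt0.
  by move=> h; apply: le_trans h _.
rewrite /equity_valuation -/A -/N mulmxA mxE; apply: ler_sum => k _.
rewrite (ger0_norm (hp k)) -{2}(mul1r (p k 0)); apply: ler_wpM2r => //.
rewrite mxE; apply: le_trans (hDsum k); apply: ler_sum => l _.
by rewrite -{2}(mul1r (D l k)); apply: ler_wpM2r.
Qed.
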